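(* In the setting below, let $(x^{(k)},z^{(k)})$ be generated by the Bregman PD3O algorithm \[x^{(k+1)}=\mathrm{prox}^{\phi_{\mathrm p}}_{\tau f}\big(x^{(k)},\tau A^Tz^{(k)}+\tau\nabla h(x^{(k)})\big),\] \[z^{(k+1)}=\mathrm{prox}^{\phi_{\mathrm d}}_{\sigma g^*}\Big(z^{(k)},-\sigma A\big(2x^{(k+1)}-x^{(k)}+\tau(\nabla h(x^{(k)})-\nabla h(x^{(k+1)}))\big)\Big),\] with $x^{(0)}\in\operatorname{int}(\operatorname{dom}\phi_{\mathrm p})$, $z^{(0)}\in\operatorname{int}(\operatorname{dom}\phi_{\mathrm d})$. Then for every $k\ge0$, all $x\in\operatorname{dom}f\cap\operatorname{dom}\phi_{\mathrm p}$ and all $z\in\operatorname{dom}g^*\cap\operatorname{dom}\phi_{\mathrm d}$, \begin{align*}\mathcal L(x^{(k+1)},z)-\mathcal L(x,z^{(k+1)})\le{}& d_{\mathrm{pd3o}}\big(x,\nabla h(x),z;x^{(k)},\nabla h(x^{(k)}),z^{(k)}\big)-d_{\mathrm{pd3o}}\big(x,\nabla h(x),z;x^{(k+1)},\nabla h(x^{(k+1)}),z^{(k+1)}\big)\\&-d_{\mathrm{pd3o}}\big(x^{(k+1)},\nabla h(x),z^{(k+1)};x^{(k)},\nabla h(x^{(k)}),z^{(k)}\big).\end{align*}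
   Context: Setting: $f:\mathbb R^n\to\mathbb R\cup\{+\infty\}$ and $g:\mathbb R^m\to\mathbb R\cup\{+\infty\}$ closed convex, $g$ and $f+h$ proper, $A\in\mathbb R^{m\times n}$, $g^*$ the conjugate of $g$. $h:\mathbb R^n\to\mathbb R$ is convex and differentiable with $h(y)-h(x)-\langle\nabla h(x),y-x\rangle\le\frac L2\|y-x\|^2$ for all $x,y$ (Euclidean norm), $L>0$. Lagrangian $\mathcal L(x,z)=f(x)+h(x)+\langle z,Ax\rangle-g^*(z)$ (value $+\infty$ if $x\notin\operatorname{dom}f$, $-\infty$ if $x\in\operatorname{dom}f$, $z\notin\operatorname{dom}g^*$). A Bregman kernel $\phi$ is convex with $\operatorname{int}(\operatorname{dom}\phi)\ne\emptyset$, continuous on $\operatorname{dom}\phi$, continuously differentiable on the interior; distance $d(x,y)=\phi(x)-\phi(y)-\langle\nabla\phi(y),x-y\rangle$ on $\operatorname{dom}\phi\times\operatorname{int}(\operatorname{dom}\phi)$; $\mathrm{prox}^\phi_F(y,a)=\operatorname{argmin}_x\big(F(x)+\langle a,x\rangle+d(x,y)\big)$, assumed to be a unique point of $\operatorname{int}(\operatorname{dom}\phi)$ for all $a$ and $y\in\operatorname{int}(\operatorname{dom}\phi)$. Kernels $\phi_{\mathrm p}$ (on $\mathbb R^n$), $\phi_{\mathrm d}$ (on $\mathbb R^m$) have distances with $d_{\mathrm p}(x,x')\ge\frac12\|x-x'\|^2$ and $d_{\mathrm d}(z,z')\ge\frac12\|z-z'\|_{\mathrm d}^2$ for a norm $\|\cdot\|_{\mathrm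 d}$. $\|A\|=\sup_{v\ne0}\|Av\|_{\mathrm d,*}/\|v\|$ with $\|\cdot\|_{\mathrm d,*}$ the dual norm. Stepsizes $\sigma,\tau>0$ satisfy $\sigma\tau\|A\|^2\le1$ and $\tau\le1/L$. The optimality conditions $0\in\partial f(x)+\nabla h(x)+A^Tz$, $0\in\partial g^*(z)-Ax$ have a solution in $\operatorname{dom}\phi_{\mathrm p}\times\operatorname{dom}\phi_{\mathrm d}$. Finally $d_{\mathrm{pd3o}}(x,y,z;x',y',z')=\frac1\tau d_{\mathrm p}(x,x')+\frac1\sigma d_{\mathrm d}(z,z')+\frac\tau2\|y-y'\|^2-\langle y-y',x-x'\rangle-\langle z-z',A(x-x')\rangle+\tau\langle z-z',A(y-y')\rangle$. *)

(* Defs.v *)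
From HB Require Import structures.
From mathcomp Require Import all_boot all_order all_algebra.
From mathcomp Require Import all_classical all_reals ereal.
Set Implicit Arguments. Unset Strict Implicit. Unset Printing Implicit Defensive.
Import Order.TTheory GRing.Theory Num.Theory.
Local Open Scope ring_scope.

Section Defs.
Variable R : realType.

Definition ip n (u v : 'cV[R]_n) : R := \sum_(i < n) u i 0 * v i 0.
Definition enorm n (u : 'cV[R]_n) : R := Num.sqrt (ip u u).

Definition edom n (F : 'cV[R]_n -> \bar R) : set 'cV[R]_n :=
  [set x | F x != +oo%E].

Definition interior_of n (D : set 'cV[R]_n) : set 'cV[R]_n :=
  [set x | exists2 e : R, 0 < e & forall y, enorm (y - x) < e -> D y].

Definition econvex n (F : 'cV[R]_n -> \bar R) : Prop :=
  forall (x y : 'cV[R]_n) (t : R), 0 <= t <= 1 ->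
    (F (t *: x + (1 - t) *: y)%R <= t%:E * F x + (1 - t)%:E * F y)%E.

Definition rconvex n (F : 'cV[R]_n -> R) : Prop :=
  forall x y (t : R), 0 <= t <= 1 ->
    F (t *: x + (1 - t) *: y) <= t * F x + (1 - t) * F y.

Definition elsc n (F : 'cV[R]_n -> \bar R) : Prop :=
  forall x (c : R), (c%:E < F x)%E ->
    exists2 e : R, 0 < e & forall y, enorm (y - x) < e -> (c%:E < F y)%E.

Definition closed_convex n (F : 'cV[R]_n -> \bar R) : Prop :=
  [/\ (forall x, F x != -oo%E), econvex F & elsc F].

Definition proper_fun n (F : 'cV[R]_n -> \bar R) : Prop :=
  (forall x, F x != -oo%E) /\ exists x, F x != +oo%E.

Definition econj m (g : 'cV[R]_m -> \bar R) (z : 'cV[R]_m) : \bar R :=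
  ereal_sup [set ((ip z y)%:E - g y)%E | y in [set: 'cV[R]_m]].

Definition has_grad n (F : 'cV[R]_n -> R) (G : 'cV[R]_n) (x : 'cV[R]_n) : Prop :=
  forall e : R, 0 < e -> exists2 d : R, 0 < d & forall v, enorm v < d ->
    `|F (x + v) - F x - ip G v| <= e * enorm v.

Definition has_egrad n (F : 'cV[R]_n -> \bar R) (G : 'cV[R]_n) (x : 'cV[R]_n) : Prop :=
  F x \is a fin_num /\
  forall e : R, 0 < e -> exists2 d : R, 0 < d & forall v, enorm v < d ->
    (`|F (x + v)%R - F x - (ip G v)%:E| <= (e * enorm v)%:E)%E.

Definition bregman_kernel n (phi : 'cV[R]_n -> \bar R) (gphi : 'cV[R]_n -> 'cV[R]_n)
  : Prop :=
  [/\ (forall x, phi x != -oo%E),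
      econvex phi,
      (exists x, interior_of (edom phi) x),
      (forall x, edom phi x -> forall e : R, 0 < e -> exists2 d : R, 0 < d &
          forall y, edom phi y -> enorm (y - x) < d -> (`|phi y - phi x| < e%:E)%E) &
      ((forall x, interior_of (edom phi) x -> has_egrad phi (gphi x) x) /\
       (forall x, interior_of (edom phi) x -> forall e : R, 0 < e ->
          exists2 d : R, 0 < d & forall y, interior_of (edom phi) y ->
            enorm (y - x) < d -> enorm (gphi y - gphi x) < e))].

Definition bdist n (phi : 'cV[R]_n -> \bar R) (gphi : 'cV[R]_n -> 'cV[R]_n)
  (x y : 'cV[R]_n) : \bar R :=
  (phi x - phi y - (ip (gphi y) (x - y))%:E)%E.

Definition is_prox n (F : 'cV[R]_n -> \bar R) (phi : 'cV[R]_n -> \bar R)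
  (gphi : 'cV[R]_n -> 'cV[R]_n) (y a p : 'cV[R]_n) : Prop :=
  forall x, (F p + (ip a p)%:E + bdist phi gphi p y
             <= F x + (ip a x)%:E + bdist phi gphi x y)%E.

Definition prox_well_defined n (F : 'cV[R]_n -> \bar R) (phi : 'cV[R]_n -> \bar R)
  (gphi : 'cV[R]_n -> 'cV[R]_n) : Prop :=
  forall y a, interior_of (edom phi) y ->
    exists p, [/\ interior_of (edom phi) p, is_prox F phi gphi y a p &
                  forall q, is_prox F phi gphi y a q -> q = p].

Definition is_subgrad n (F : 'cV[R]_n -> \bar R) (v x : 'cV[R]_n) : Prop :=
  F x \is a fin_num /\ forall y, (F x + (ip v (y - x))%:E <= F y)%E.

Definition is_norm m (N : 'cV[R]_m -> R) : Prop :=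
  [/\ (forall z, 0 <= N z),
      (forall z, N z = 0 -> z = 0),
      (forall (a : R) z, N (a *: z) = `|a| * N z) &
      (forall z w, N (z + w) <= N z + N w)].

Definition dual_norm m (N : 'cV[R]_m -> R) (y : 'cV[R]_m) : R :=
  sup [set ip y z | z in [set z | N z <= 1]].

Definition op_norm m n (N : 'cV[R]_m -> R) (A : 'M[R]_(m, n)) : R :=
  sup [set dual_norm N (A *m v) / enorm v | v in [set v : 'cV[R]_n | v != 0]].

Definition lagr m n (f : 'cV[R]_n -> \bar R) (h : 'cV[R]_n -> R)
  (g : 'cV[R]_m -> \bar R) (A : 'M[R]_(m, n)) (x : 'cV[R]_n) (z : 'cV[R]_m)
  : \bar R :=
  if f x == +oo%E then +oo%E
  else if econj g z == +oo%E then -oo%E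
  else (f x + (h x + ip z (A *m x))%:E - econj g z)%E.

Definition dpd3o m n (phip : 'cV[R]_n -> \bar R) (gphip : 'cV[R]_n -> 'cV[R]_n)
  (phid : 'cV[R]_m -> \bar R) (gphid : 'cV[R]_m -> 'cV[R]_m)
  (A : 'M[R]_(m, n)) (tau sigma : R)
  (x y : 'cV[R]_n) (z : 'cV[R]_m) (x' y' : 'cV[R]_n) (z' : 'cV[R]_m) : \bar R :=
  ((tau^-1)%:E * bdist phip gphip x x' + (sigma^-1)%:E * bdist phid gphid z z'
   + (tau / 2 * enorm (y - y') ^+ 2 - ip (y - y') (x - x')
      - ip (z - z') (A *m (x - x')) + tau * ip (z - z') (A *m (y - y')))%:E)%E.

End Defs.

(* Main.v *)
Require Import Defs.
From HB Require Import structures.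
From mathcomp Require Import all_boot all_order all_algebra.
From mathcomp Require Import all_classical all_reals ereal.
From mathcomp Require Import ring lra.
Import Order.TTheory GRing.Theory Num.Theory.
Local Open Scope ring_scope.
Set Implicit Arguments. Unset Strict Implicit.

Lemma ipE (R : realType) n (u v : 'cV[R]_n) : ip u v = (u^T *m v) 0 0.
Proof. by rewrite /ip !mxE; apply: eq_bigr => i _; rewrite mxE. Qed.

Lemma ipC (R : realType) n (u v : 'cV[R]_n) : ip u v = ip v u.
Proof. by rewrite /ip; apply: eq_bigr => i _; rewrite mulrC. Qed.

Lemma ipDl (R : realType) n (u v w : 'cV[R]_n) : ip (u + v) w = ip u w + ip v w.
Proof. by rewrite /ip -big_split; apply: eq_bigr => i _; rewrite !mxE mulrDl. Qed.

Lemma ipDr (R : realType) n (u v w : 'cV[R]_n) : ip w (u + v) = ip w u + ip w v.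
Proof. by rewrite ipC ipDl !(ipC w). Qed.

Lemma ipZl (R : realType) n (a : R) (u w : 'cV[R]_n) : ip (a *: u) w = a * ip u w.
Proof. by rewrite /ip mulr_sumr; apply: eq_bigr => i _; rewrite !mxE mulrA. Qed.

Lemma ipZr (R : realType) n (a : R) (u w : 'cV[R]_n) : ip w (a *: u) = a * ip w u.
Proof. by rewrite ipC ipZl ipC. Qed.

Lemma ipNl (R : realType) n (u w : 'cV[R]_n) : ip (- u) w = - ip u w.
Proof. by rewrite -scaleN1r ipZl mulN1r. Qed.

Lemma ipNr (R : realType) n (u w : 'cV[R]_n) : ip w (- u) = - ip w u.
Proof. by rewrite ipC ipNl ipC. Qed.

Lemma ipBl (R : realType) n (u v w : 'cV[R]_n) : ip (u - v) w = ip u w - ip v w.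
Proof. by rewrite ipDl ipNl. Qed.

Lemma ipBr (R : realType) n (u v w : 'cV[R]_n) : ip w (u - v) = ip w u - ip w v.
Proof. by rewrite ipDr ipNr. Qed.

Lemma ipTl (R : realType) m n (A : 'M[R]_(m, n)) z x : ip (A^T *m z) x = ip z (A *m x).
Proof. by rewrite !ipE trmx_mul trmxK mulmxA. Qed.

Lemma ip_ge0 (R : realType) n (u : 'cV[R]_n) : 0 <= ip u u.
Proof. by rewrite /ip; apply: sumr_ge0 => i _; rewrite -expr2 sqr_ge0. Qed.

Lemma enorm_sq (R : realType) n (u : 'cV[R]_n) : enorm u ^+ 2 = ip u u.
Proof. by rewrite /enorm sqr_sqrtr // ip_ge0. Qed.

Lemma enorm_ge0 (R : realType) n (u : 'cV[R]_n) : 0 <= enorm u.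
Proof. exact: sqrtr_ge0. Qed.

Lemma enormZ (R : realType) n (a : R) (u : 'cV[R]_n) : 0 <= a -> enorm (a *: u) = a * enorm u.
Proof.
move=> a0; rewrite /enorm ipZl ipZr mulrA -expr2 sqrtrM ?sqr_ge0 //.
by rewrite sqrtr_sqr ger0_norm.
Qed.

Lemma enorm0 (R : realType) n : enorm (0 : 'cV[R]_n) = 0.
Proof. by rewrite -(scale0r (0 : 'cV[R]_n)) enormZ // mul0r. Qed.

Lemma interior_in (R : realType) n (D : set 'cV[R]_n) x : interior_of D x -> D x.
Proof. by case=> e e0 H; apply: H; rewrite subrr enorm0. Qed.

Lemma eps_ge0 (R : realType) (c K : R) : 0 <= K -> (forall e, 0 < e -> 0 <= c + e * K) -> 0 <= c.
Proof.
move=> K0 H; rewrite leNgt; apply/negP => c0.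
have e0 : 0 < - c / (2 * (K + 1)) by apply: divr_gt0; lra.
have := H _ e0.
have -> : - c / (2 * (K + 1)) * K = - c * (K / (2 * (K+1))) by rewrite mulrAC mulrA.
have : K / (2 * (K + 1)) <= 1/2.
  rewrite ler_pdivrMr; last lra.
  lra.
move=> HK.
have : - c * (K / (2 * (K + 1))) <= -c * (1/2) by rewrite ler_wpM2l //; lra.
lra.
Qed.

Lemma small_t (R : realType) (K d : R) : 0 <= K -> 0 < d ->
  exists t : R, [/\ 0 < t, t <= 1 & t * K < d].
Proof.
move=> K0 d0; exists (d / (2 * (K + d))); split.
- by apply: divr_gt0; lra.
- rewrite ler_pdivrMr; lra.
- rewrite mulrAC ltr_pdivrMr; last lra.
  nra.
Qed.

Lemma conv_comb (R : realType) n (t : R) (v p : 'cV[R]_n) :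
  t *: v + (1 - t) *: p = p + t *: (v - p).
Proof. by rewrite scalerBl scale1r scalerBr [RHS]addrCA. Qed.

Lemma conv_grad (R : realType) n (h : 'cV[R]_n -> R) G p v :
  rconvex h -> has_grad h G p -> h p + ip G (v - p) <= h v.
Proof.
move=> hc hg.
suff : 0 <= h v - h p - ip G (v - p) by lra.
apply: (eps_ge0 (enorm_ge0 (v - p))) => e e0.
have [d d0 Hd] := hg e e0.
have [t [t0 t1 tK]] := small_t (enorm_ge0 (v - p)) d0.
have Hn : enorm (t *: (v - p)) = t * enorm (v - p) by rewrite enormZ // ltW.
have := Hd (t *: (v - p)); rewrite Hn => /(_ tK).
have Hc : h (p + t *: (v - p)) <= t * h v + (1 - t) * h p.
  by rewrite -conv_comb; apply: hc; rewrite (ltW t0) t1.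
rewrite ipZr.
rewrite ler_norml => /andP [H1 H2].
have : 0 <= t * (h v - h p - ip G (v - p) + e * enorm (v - p)) by nra.
by rewrite pmulr_rge0.
Qed.

Lemma cocoercive (R : realType) n (h : 'cV[R]_n -> R) gh (L : R) p u :
  rconvex h -> (forall x, has_grad h (gh x) x) -> 0 < L ->
  (forall x y, h y - h x - ip (gh x) (y - x) <= L / 2 * enorm (y - x) ^+ 2) ->
  1 / (2 * L) * ip (gh u - gh p) (gh u - gh p) <= h u - h p - ip (gh p) (u - p).
Proof.
move=> hc hg L0 hs.
set dl := gh u - gh p.
set v := u - L^-1 *: dl.
have H1 := conv_grad v hc (hg p).
have H2 := hs u v.
rewrite enorm_sq in H2.
have Evu : v - u = - (L^-1 *: dl) by rewrite /v addrAC subrr add0r.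
rewrite Evu ipNl ipNr opprK ipZl ipZr ipNr ipZr in H2.
have Evp : v - p = (u - p) - L^-1 *: dl by rewrite /v addrAC.
rewrite Evp ipBr ipZr in H1.
have Egu : ip (gh u) dl = ip (gh p) dl + ip dl dl by rewrite /dl ipBl; ring.
rewrite Egu in H2.
have Li : L * L^-1 = 1 by rewrite mulfV // gt_eqF.
have : 1 / (2 * L) = L^-1 / 2 by rewrite mul1r invfM mulrC.
move=> ->.
have HL : L / 2 * (L^-1 * (L^-1 * ip dl dl)) = L^-1 / 2 * ip dl dl.
  have -> : L / 2 * (L^-1 * (L^-1 * ip dl dl)) = (L * L^-1) * (L^-1 / 2 * ip dl dl) by ring.
  by rewrite Li mul1r.
rewrite !mulrN !opprK HL in H2.
lra.
Qed.

Lemma fin_le (R : realType) (u : \bar R) (r : R) : u != -oo%E -> (u <= r%:E)%E ->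
  exists s, u = s%:E /\ s <= r.
Proof.
case: u => [s| |] //= _.
- by rewrite lee_fin => H; exists s.
Qed.

Lemma three_point (R : realType) n (F phi : 'cV[R]_n -> \bar R) gphi y a p x
  (Fx Fp phix phiy php : R) :
  F x = Fx%:E -> F p = Fp%:E -> phi x = phix%:E -> phi y = phiy%:E -> phi p = php%:E ->
  (forall z, F z != -oo%E) -> (forall z, phi z != -oo%E) -> econvex phi ->
  (forall t, 0 <= t <= 1 -> (F (t *: x + (1-t) *: p)%R <= (t*Fx + (1-t)*Fp)%R%:E)%E) ->
  has_egrad phi (gphi p) p -> is_prox F phi gphi y a p ->
  Fp + ip a p + (php - phiy - ip (gphi y) (p - y)) + (phix - php - ip (gphi p) (x - p))
  <= Fx + ip a x + (phix - phiy - ip (gphi y) (x - y)).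
Proof.
move=> EFx EFp Ephx Ephy Ephp Fn phin phic Fc [_ phig] Hp.
suff : 0 <= Fx - Fp + ip a (x - p) + ip (gphi p) (x - p) - ip (gphi y) (x - p).
  rewrite !ipBr; lra.
apply: (eps_ge0 (enorm_ge0 (x - p))) => e e0.
have [d d0 Hd] := phig e e0.
have [t [t0 t1 tK]] := small_t (enorm_ge0 (x - p)) d0.
have t01 : 0 <= t <= 1 by rewrite (ltW t0) t1.
have Hn : enorm (t *: (x - p)) = t * enorm (x - p) by rewrite enormZ // ltW.
have := Hd (t *: (x - p)); rewrite Hn => /(_ tK).
have [Ft [EFt Ftle]] := fin_le (Fn _) (Fc t t01).
have := phic x p t t01; rewrite Ephx Ephp -!EFinM -EFinD => Hphc.
have [Pt [EPt Ptle]] := fin_le (phin _) Hphc.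
rewrite -conv_comb EPt.
rewrite -!EFinN -!EFinD lee_fin ler_norml => /andP [_ Hg].
have := Hp (t *: x + (1 - t) *: p).
rewrite /bdist EFt EFp EPt Ephp Ephy.
rewrite -?EFinN -?EFinD -?EFinN -?EFinD -?EFinN -?EFinD lee_fin.
rewrite conv_comb.
have -> : p + t *: (x - p) - y = (p - y) + t *: (x - p) by rewrite addrAC.
rewrite [ip a (_ + _)]ipDr [ip (gphi y) (_ + t *: _)]ipDr !ipZr => Hpr.
rewrite ipZr in Hg.
have : 0 <= t * (Fx - Fp + ip a (x - p) + ip (gphi p) (x - p) - ip (gphi y) (x - p) + e * enorm (x - p)).
  nra.
by rewrite pmulr_rge0.
Qed.

Lemma final_alg (R : realType) n m (A : 'M[R]_(m, n)) (tau sigma L : R)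
  (u xk xp gu gk gp : 'cV[R]_n) (w zk zp : 'cV[R]_m)
  (fu fp gw gz hu hp Buk Bup Bpk Cwk Cwp Cpk : R) :
  0 < tau -> 0 < sigma -> 0 < L -> tau <= 1 / L ->
  tau * fp + ip (tau *: (A^T *m zk) + tau *: gk) xp + Bpk + Bup
    <= tau * fu + ip (tau *: (A^T *m zk) + tau *: gk) u + Buk ->
  sigma * gz + ip (- (sigma *: (A *m (2%:R *: xp - xk + tau *: (gk - gp))))) zp + Cpk + Cwp
    <= sigma * gw + ip (- (sigma *: (A *m (2%:R *: xp - xk + tau *: (gk - gp))))) w + Cwk ->
  1 / (2 * L) * ip (gu - gp) (gu - gp) <= hu - hp - ip gp (u - xp) ->
  fp + (hp + ip w (A *m xp)) - gw - (fu + (hu + ip zp (A *m u)) - gz) <=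
  tau^-1 * Buk + sigma^-1 * Cwk
   + (tau / 2 * enorm (gu - gk) ^+ 2 - ip (gu - gk) (u - xk)
      - ip (w - zk) (A *m (u - xk)) + tau * ip (w - zk) (A *m (gu - gk)))
  - (tau^-1 * Bup + sigma^-1 * Cwp
   + (tau / 2 * enorm (gu - gp) ^+ 2 - ip (gu - gp) (u - xp)
      - ip (w - zp) (A *m (u - xp)) + tau * ip (w - zp) (A *m (gu - gp))))
  - (tau^-1 * Bpk + sigma^-1 * Cpk
   + (tau / 2 * enorm (gu - gk) ^+ 2 - ip (gu - gk) (xp - xk)
      - ip (zp - zk) (A *m (xp - xk)) + tau * ip (zp - zk) (A *m (gu - gk)))).
Proof.
move=> t0 s0 L0 tL HP HD HC.
rewrite -enorm_sq in HC.
have HN : tau / 2 * enorm (gu - gp) ^+ 2 <= 1 / (2 * L) * enorm (gu - gp) ^+ 2.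
  apply: ler_wpM2r; first by rewrite sqr_ge0.
  rewrite mul1r invfM; move: tL; rewrite mul1r; lra.
rewrite !ipDl !ipZl !ipTl in HP.
rewrite !ipNl !ipZl ![ip (A *m _) _]ipC in HD.
rewrite !mulmxDr !mulmxN -!scalemxAr !mulmxDr !mulmxN in HD.
rewrite !ipDr !ipNr !ipZr !ipBr in HD.
rewrite !mulmxBr !ipBl !ipBr in HC *.
have tn : tau != 0 by rewrite gt_eqF.
have sn : sigma != 0 by rewrite gt_eqF.
rewrite -[Bpk](mulVKf tn) -[Bup](mulVKf tn) -[Buk](mulVKf tn) in HP.
rewrite -[Cpk](mulVKf sn) -[Cwp](mulVKf sn) -[Cwk](mulVKf sn) in HD.
have HP2 : tau * (fp + ip zk (A *m xp) + ip gk xp + tau^-1 * Bpk + tau^-1 * Bup)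
   <= tau * (fu + ip zk (A *m u) + ip gk u + tau^-1 * Buk).
  rewrite !mulrDr; lra.
have HD2 : sigma * (gz - (2 * ip zp (A *m xp) - ip zp (A *m xk) +
     tau * (ip zp (A *m gk) - ip zp (A *m gp))) + sigma^-1 * Cpk + sigma^-1 * Cwp)
   <= sigma * (gw - (2 * ip w (A *m xp) - ip w (A *m xk) +
     tau * (ip w (A *m gk) - ip w (A *m gp))) + sigma^-1 * Cwk).
  rewrite !mulrDr !mulrN; lra.
rewrite ler_pM2l // in HP2.
rewrite ler_pM2l // in HD2.
lra.
Qed.

Lemma fin_of (R : realType) (u : \bar R) : u != -oo%E -> u != +oo%E -> exists r, u = r%:E.
Proof. by case: u => [r| |] // _ _; exists r. Qed.

Lemma pmul_yinf (R : realType) (c : R) : 0 < c -> (c%:E * +oo)%E = +oo%E.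
Proof. by move=> c0; rewrite mulry gtr0_sg // mul1e. Qed.

Lemma scale_nm (R : realType) (c : R) (u : \bar R) : 0 < c -> u != -oo%E -> (c%:E * u)%E != -oo%E.
Proof. by move=> c0; case: u => [r| |] // _; rewrite pmul_yinf. Qed.

Lemma scale_conv (R : realType) n (c : R) (f : 'cV[R]_n -> \bar R) x p (fx fp : R) :
  0 < c -> (forall z, f z != -oo%E) ->
  (forall t, 0 <= t <= 1 -> (f (t *: x + (1-t) *: p)%R <= (t*fx + (1-t)*fp)%R%:E)%E) ->
  (forall t, 0 <= t <= 1 -> ((fun z => c%:E * f z) (t *: x + (1-t) *: p)%R
       <= (t*(c*fx) + (1-t)*(c*fp))%R%:E)%E).
Proof.
move=> c0 fn Hc t t01 /=.
have [s [Es sle]] := fin_le (fn _) (Hc t t01).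
rewrite Es -EFinM lee_fin.
have -> : t * (c * fx) + (1 - t) * (c * fp) = c * (t * fx + (1 - t) * fp) by ring.
by rewrite ler_pM2l.
Qed.

Lemma econj_nm (R : realType) m (g : 'cV[R]_m -> \bar R) : proper_fun g -> forall z, econj g z != -oo%E.
Proof.
case=> gn [y0 gy0] z.
have [r Er] := fin_of (gn y0) gy0.
suff : ((ip z y0 - r)%:E <= econj g z)%E by case: (econj g z).
apply: le_ereal_sup_tmp; exists ((ip z y0)%:E - g y0)%E; first by exists y0.
by rewrite Er -EFinN -EFinD.
Qed.

Lemma econj_conv (R : realType) m (g : 'cV[R]_m -> \bar R) z1 z2 (c1 c2 : R) :
  (forall y, g y != -oo%E) -> econj g z1 = c1%:E -> econj g z2 = c2%:E ->
  forall t, 0 <= t <= 1 -> (econj g (t *: z1 + (1-t) *: z2)%R <= (t*c1 + (1-t)*c2)%R%:E)%E.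
Proof.
move=> gn E1 E2 t /andP [t0 t1].
apply/ereal_supP => _ [y _ <-].
case Er: (g y) => [r| |].
- rewrite -EFinN -EFinD lee_fin.
  have H1 : ((ip z1 y)%:E - g y <= econj g z1)%E
    by apply: le_ereal_sup_tmp; exists ((ip z1 y)%:E - g y)%E => //; exists y.
  have H2 : ((ip z2 y)%:E - g y <= econj g z2)%E
    by apply: le_ereal_sup_tmp; exists ((ip z2 y)%:E - g y)%E => //; exists y.
  rewrite Er E1 -EFinN -EFinD lee_fin in H1.
  rewrite Er E2 -EFinN -EFinD lee_fin in H2.
  rewrite ipDl !ipZl.
  have -> : t * ip z1 y + (1 - t) * ip z2 y - r = t * (ip z1 y - r) + (1 - t) * (ip z2 y - r) by ring.
  apply: lerD; apply: ler_wpM2l => //; lra.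
- by rewrite addeNy leNye.
- by move: (gn y); rewrite Er.
Qed.

Lemma prox_fin (R : realType) n (F phi : 'cV[R]_n -> \bar R) gphi y a p x (Fx phix phiy php : R) :
  is_prox F phi gphi y a p -> F x = Fx%:E -> phi x = phix%:E -> phi y = phiy%:E ->
  phi p = php%:E -> F p != +oo%E.
Proof.
move=> Hp EFx Ex Ey Ep; apply/negP => /eqP EF.
have := Hp x; rewrite /bdist EF EFx Ex Ey Ep.
rewrite -?EFinN -?EFinD -?EFinN -?EFinD -?EFinN -?EFinD.
by rewrite -addeA addye.
Qed.
Unset Implicit Arguments. Set Strict Implicit.
Theorem mainTheorem8 (R : realType) (n m : nat)
  (f : 'cV[R]_n -> \bar R) (g : 'cV[R]_m -> \bar R)
  (h : 'cV[R]_n -> R) (gh : 'cV[R]_n -> 'cV[R]_n) (L : R)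
  (A : 'M[R]_(m, n))
  (phip : 'cV[R]_n -> \bar R) (gphip : 'cV[R]_n -> 'cV[R]_n)
  (phid : 'cV[R]_m -> \bar R) (gphid : 'cV[R]_m -> 'cV[R]_m)
  (Nd : 'cV[R]_m -> R) (sigma tau : R)
  (xs : nat -> 'cV[R]_n) (zs : nat -> 'cV[R]_m) :
  closed_convex f -> closed_convex g ->
  proper_fun g -> proper_fun (fun x => (f x + (h x)%:E)%E) ->
  rconvex h -> (forall x, has_grad h (gh x) x) -> 0 < L ->
  (forall x y, h y - h x - ip (gh x) (y - x) <= L / 2 * enorm (y - x) ^+ 2) ->
  bregman_kernel phip gphip -> bregman_kernel phid gphid ->
  prox_well_defined (fun x => (tau%:E * f x)%E) phip gphip ->
  prox_well_defined (fun z => (sigma%:E * econj g z)%E) phid gphid ->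
  is_norm Nd ->
  (forall x x', edom phip x -> interior_of (edom phip) x' ->
     ((1 / 2 * enorm (x - x') ^+ 2)%:E <= bdist phip gphip x x')%E) ->
  (forall z z', edom phid z -> interior_of (edom phid) z' ->
     ((1 / 2 * Nd (z - z') ^+ 2)%:E <= bdist phid gphid z z')%E) ->
  0 < sigma -> 0 < tau ->
  sigma * tau * op_norm Nd A ^+ 2 <= 1 -> tau <= 1 / L ->
  (exists (xo : 'cV[R]_n) (zo : 'cV[R]_m), [/\ edom phip xo, edom phid zo,
      is_subgrad f (- (gh xo + A^T *m zo)) xo &
      is_subgrad (econj g) (A *m xo) zo]) ->
  interior_of (edom phip) (xs 0%N) -> interior_of (edom phid) (zs 0%N) ->
  (forall k, is_prox (fun x => (tau%:E * f x)%E) phip gphip (xs k)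
               (tau *: (A^T *m zs k) + tau *: gh (xs k)) (xs k.+1)) ->
  (forall k, is_prox (fun z => (sigma%:E * econj g z)%E) phid gphid (zs k)
               (- (sigma *: (A *m (2%:R *: xs k.+1 - xs k
                                  + tau *: (gh (xs k) - gh (xs k.+1))))))
               (zs k.+1)) ->
  forall (k : nat) (x : 'cV[R]_n) (z : 'cV[R]_m),
    edom f x -> edom phip x -> edom (econj g) z -> edom phid z ->
    (lagr f h g A (xs k.+1) z - lagr f h g A x (zs k.+1)
     <= dpd3o phip gphip phid gphid A tau sigma
          x (gh x) z (xs k) (gh (xs k)) (zs k)
        - dpd3o phip gphip phid gphid A tau sigma
          x (gh x) z (xs k.+1) (gh (xs k.+1)) (zs k.+1)
        - dpd3o phip gphip phid gphid A tau sigma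
          (xs k.+1) (gh x) (zs k.+1) (xs k) (gh (xs k)) (zs k))%E.
Proof.
move=> [fn fconv _] [gn _ _] Hgp _ Hhc Hhg L0 Hhs [phipn phipc _ _ [phipg _]]
  [phidn phidc _ _ [phidg _]] Pwp Pwd _ _ _ s0 t0 _ HtL _ Hx0 Hz0 Hxs Hzs k u w
  Hfu Hpu Hgw Hdw.
have intx : forall k, interior_of (edom phip) (xs k).
  elim => // j IH.
  have [p [ip Hp Hu]] := Pwp _ (tau *: (A^T *m zs j) + tau *: gh (xs j)) IH.
  by rewrite (Hu _ (Hxs j)).
have intz : forall k, interior_of (edom phid) (zs k).
  elim => // j IH.
  have [p [ip Hp Hu]] := Pwd _ (- (sigma *: (A *m (2%:R *: xs j.+1 - xs j
                                  + tau *: (gh (xs j) - gh (xs j.+1)))))) IH.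
  by rewrite (Hu _ (Hzs j)).
have [Pu EPu] := fin_of (phipn u) Hpu.
have [Pk EPk] := fin_of (phipn _) (interior_in (intx k)).
have [Pp EPp] := fin_of (phipn _) (interior_in (intx k.+1)).
have [Dw EDw] := fin_of (phidn w) Hdw.
have [Dk EDk] := fin_of (phidn _) (interior_in (intz k)).
have [Dp EDp] := fin_of (phidn _) (interior_in (intz k.+1)).
have [fu Efu] := fin_of (fn u) Hfu.
have [gw Egw] := fin_of (econj_nm Hgp w) Hgw.
have Hfp : f (xs k.+1) != +oo%E.
  have := prox_fin (F := fun x => (tau%:E * f x)%E) (x := u) (Fx := tau * fu)
    (Hxs k) _ EPu EPk EPp.
  rewrite /= Efu -EFinM => /(_ erefl).
  by apply: contra => /eqP ->; rewrite pmul_yinf.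
have [fp Efp] := fin_of (fn _) Hfp.
have Hgz : econj g (zs k.+1) != +oo%E.
  have := prox_fin (F := fun z => (sigma%:E * econj g z)%E) (x := w) (Fx := sigma * gw)
    (Hzs k) _ EDw EDk EDp.
  rewrite /= Egw -EFinM => /(_ erefl).
  by apply: contra => /eqP ->; rewrite pmul_yinf.
have [gz Egz] := fin_of (econj_nm Hgp _) Hgz.
have fconv' : forall t, 0 <= t <= 1 ->
    (f (t *: u + (1 - t) *: xs k.+1)%R <= (t * fu + (1 - t) * fp)%R%:E)%E.
  by move=> t t01; have := fconv u (xs k.+1) t t01; rewrite Efu Efp -!EFinM -EFinD.
have TP := three_point (F := fun x => (tau%:E * f x)%E) (Fx := tau * fu) (Fp := tau * fp)
  (x := u) (p := xs k.+1)
  (ltac:(by rewrite /= Efu -EFinM)) (ltac:(by rewrite /= Efp -EFinM)) EPu EPk EPp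
  (fun z => scale_nm t0 (fn z)) phipn phipc (scale_conv t0 fn fconv')
  (phipg _ (intx k.+1)) (Hxs k).
have TD := three_point (F := fun z => (sigma%:E * econj g z)%E) (Fx := sigma * gw)
  (Fp := sigma * gz) (x := w) (p := zs k.+1)
  (ltac:(by rewrite /= Egw -EFinM)) (ltac:(by rewrite /= Egz -EFinM)) EDw EDk EDp
  (fun z => scale_nm s0 (econj_nm Hgp z)) phidn phidc
  (scale_conv s0 (econj_nm Hgp) (econj_conv gn Egw Egz))
  (phidg _ (intz k.+1)) (Hzs k).
have CC := cocoercive (xs k.+1) u Hhc Hhg L0 Hhs.
rewrite /lagr Efp Egw Efu Egz /=.
rewrite /dpd3o /bdist EPu EPk EPp EDw EDk EDp.
rewrite -?EFinN -?EFinD -?EFinM -?EFinN -?EFinD -?EFinM -?EFinN -?EFinD -?EFinM.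
rewrite -?EFinN -?EFinD -?EFinM -?EFinN -?EFinD -?EFinM -?EFinN -?EFinD -?EFinM.
rewrite lee_fin.
exact: (final_alg t0 s0 L0 HtL TP TD CC).
Qed.
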